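(* Let $(M,\Delta,S,\varepsilon)$ be a weak Kac algebra. Then $(M,\Delta,S)$ is a generalized counital $C^*$-bialgebra, i.e. the map $\varepsilon_t=\mu(\mathrm{id}\otimes S)\Delta$ satisfies: (1) $\varepsilon_t(1)=1$; (2) $\varepsilon_t(M)\subset N_t$; (3) $(\mathrm{id}\otimes\varepsilon_t)\Delta(x)=e(x\otimes 1)$ for all $x\in N_s$.
   Context: All algebras are finite-dimensional over $\mathbb{C}$; $\varsigma$ denotes the flip $x\otimes y\mapsto y\otimes x$ and $\mu(x\otimes y)=xy$. A weak Kac algebra is a quadruple $(M,\Delta,S,\varepsilon)$ where $M$ is a finite-dimensional $C^*$-algebra; $\Delta:M\to M\otimes M$ is an injective, not necessarily unital, $*$-homomorphism with $(\Delta\otimes\mathrm{id})\Delta=(\mathrm{id}\otimes\Delta)\Delta$; $S:M\to M$ is a linear, unital, antimultiplicative, $*$-preserving bijection with $S^2=\mathrm{id}$ and $(S\otimes S)\circ\Delta=\varsigma\circ\Delta\circ S$; and $\varepsilon:M\to\mathbb{C}$ is linear with $(\varepsilon\otimes\mathrm{id})\Delta=(\mathrm{id}\otimes\varepsilon)\Delta=\mathrm{id}$, $\varepsilon\circ S=\varepsilon$, $\varepsilon(x^* )=\overline{\varepsilon(x)}$, $(\varepsilon\otimes\varepsilon)((x\otimes1)e(1\otimes y))=\varepsilon(xy)$ for all $x,y$, where $e:=\Delta(1)$, and $(\varepsilon_s\otimes\mathrm{id})\Delta(x)=(1\otimes x)e$ for all $x$, where $\varepsilon_s:=\mu(S\otimes\mathrm{id})\Delta$.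 The target and source Cartan subalgebras are $N_t=\{x\in M:\Delta(x)=e(x\otimes 1)=(x\otimes1)e\}$ and $N_s=\{x\in M:\Delta(x)=e(1\otimes x)=(1\otimes x)e\}$. *)

(* Defs.v *)
(* Weak Kac algebras realised concretely: a finite-dimensional
   C*-algebra M is a unital *-subalgebra of the matrix algebra 'M[C]_n,
   C = R[i] (R : realType, i.e. C is the field of complex numbers),
   M (x) M is the span of the Kronecker products a *t b (a, b in M) inside
   'M[C]_(n * n), and linear maps are linear maps on the ambient matrix
   spaces (arbitrary linear extensions; all axioms are only imposed on M). *)
From HB Require Import structures.
From mathcomp Require Import all_boot all_algebra.
From mathcomp Require Import reals.
From mathcomp Require Import complex mxtens.

Set Implicit Arguments.
Unset Strict Implicit.
Unset Printing Implicit Defensive.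

Import GRing.Theory Num.Theory.
Local Open Scope ring_scope.

Section WeakKac.
Variables (R : realType) (n : nat).
Local Notation C := (R[i]).
Local Notation Mn := 'M[C]_n.
Local Notation MMn := 'M[C]_(n * n).

Definition mxadj {p} (A : 'M[C]_p) : 'M[C]_p := (map_mx (@conjc R) A)^T.

Definition Cstar_subalg (M : {pred Mn}) : Prop :=
  [/\ 1%:M \in M,
      {in M &, forall x y, x + y \in M},
      forall (c : C), {in M, forall x, c *: x \in M},
      {in M &, forall x y, x *m y \in M} &
      {in M, forall x, mxadj x \in M}].

Definition in_tens (M : {pred Mn}) (X : MMn) : Prop :=
  exists k (a b : 'I_k -> Mn),
    (forall i, a i \in M /\ b i \in M) /\ X = \sum_(i < k) (a i *t b i).

(* the linear map X |-> sum F a_i b_i on 'M_n (x) 'M_n induced by a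
   bilinear F, computed on the basis of matrix units *)
Definition tens_lift {V : lmodType C} (F : Mn -> Mn -> V) (X : MMn) : V :=
  \sum_(i < n) \sum_(j < n) \sum_(k < n) \sum_(l < n)
     X (mxtens_index (i, k)) (mxtens_index (j, l))
       *: F (delta_mx i j) (delta_mx k l).

Definition tmap (f g : Mn -> Mn) : MMn -> MMn :=
  tens_lift (fun a b => f a *t g b).
Definition tflip : MMn -> MMn := tens_lift (fun a b => b *t a).
Definition tmul : MMn -> Mn := tens_lift (fun a b => a *m b).
Definition slice_l (phi : Mn -> C) : MMn -> Mn :=
  tens_lift (fun a b => phi a *: b).
Definition slice_r (phi : Mn -> C) : MMn -> Mn :=
  tens_lift (fun a b => phi b *: a).
Definition tfun (phi psi : Mn -> C) : MMn -> C^o :=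
  tens_lift (fun a b => (phi a * psi b : C^o)).

Variables (Delta : {linear Mn -> MMn}) (S : {linear Mn -> Mn})
          (eps : {linear Mn -> C^o}).

Definition e_unit : MMn := Delta 1%:M.
Definition eps_t (x : Mn) : Mn := tmul (tmap id S (Delta x)).
Definition eps_s (x : Mn) : Mn := tmul (tmap S id (Delta x)).

Definition Delta_id (X : MMn) : 'M[C]_(n * n * n) :=
  tens_lift (fun a b => Delta a *t b) X.
Definition id_Delta (X : MMn) : 'M[C]_(n * n * n) :=
  castmx (mulnA n n n, mulnA n n n) (tens_lift (fun a b => a *t Delta b) X).

Definition in_Nt (M : {pred Mn}) (x : Mn) : Prop :=
  [/\ x \in M, Delta x = e_unit *m (x *t (1%:M : Mn))
             & Delta x = (x *t (1%:M : Mn)) *m e_unit].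
Definition in_Ns (M : {pred Mn}) (x : Mn) : Prop :=
  [/\ x \in M, Delta x = e_unit *m ((1%:M : Mn) *t x)
             & Delta x = ((1%:M : Mn) *t x) *m e_unit].

Record weak_Kac_algebra (M : {pred Mn}) : Prop := WeakKac {
  wk_Cstar : Cstar_subalg M;
  wk_Delta_tens : {in M, forall x, in_tens M (Delta x)};
  wk_Delta_mul : {in M &, forall x y, Delta (x *m y) = Delta x *m Delta y};
  wk_Delta_adj : {in M, forall x, Delta (mxadj x) = mxadj (Delta x)};
  wk_Delta_inj : {in M &, injective Delta};
  wk_coassoc : {in M, forall x, Delta_id (Delta x) = id_Delta (Delta x)};
  wk_S_in : {in M, forall x, S x \in M};
  wk_S_inj : {in M &, injective S};
  wk_S_surj : {in M, forall y, exists2 x, x \in M & S x = y};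
  wk_S_unit : S 1%:M = 1%:M;
  wk_S_mul : {in M &, forall x y, S (x *m y) = S y *m S x};
  wk_S_adj : {in M, forall x, S (mxadj x) = mxadj (S x)};
  wk_S_invol : {in M, forall x, S (S x) = x};
  wk_S_Delta : {in M, forall x, tmap S S (Delta x) = tflip (Delta (S x))};
  wk_eps_l : {in M, forall x, slice_l eps (Delta x) = x};
  wk_eps_r : {in M, forall x, slice_r eps (Delta x) = x};
  wk_eps_S : {in M, forall x, eps (S x) = eps x};
  wk_eps_adj : {in M, forall x, eps (mxadj x) = conjc (eps x)};
  wk_eps_mul : {in M &, forall x y,
    tfun eps eps ((x *t (1%:M : Mn)) *m e_unit *m ((1%:M : Mn) *t y))
    = eps (x *m y)};
  wk_eps_s : {in M, forall x,
    tmap eps_s id (Delta x) = ((1%:M : Mn) *t x) *m e_unit}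
}.

End WeakKac.

(* Main.v *)
Require Import Defs.
From HB Require Import structures.
From mathcomp Require Import all_boot all_algebra.
From mathcomp Require Import reals.
From mathcomp Require Import complex mxtens.
Import GRing.Theory Num.Theory.
Local Open Scope ring_scope.
Set Implicit Arguments. Unset Strict Implicit. Unset Printing Implicit Defensive.

Section Gen.
Variable R : realType.
Local Notation C := (R[i]).

Definition lin {U V : lmodType C} (f : U -> V) :=
  forall (c : C) u v, f (c *: u + v) = c *: f u + f v.

Section LinF.
Variables (U V : lmodType C) (f : U -> V) (hf : lin f).
Lemma lin0 : f 0 = 0.
Proof.
have := hf 1 0 0; rewrite !scale1r addr0 => /(congr1 (fun x => x - f 0)).
by rewrite subrr addrK => <-.
Qed.
Lemma linD u v : f (u + v) = f u + f v.
Proof. by have := hf 1 u v; rewrite !scale1r. Qed.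
Lemma linZ c u : f (c *: u) = c *: f u.
Proof. by have := hf c u 0; rewrite !addr0 lin0 addr0. Qed.
Lemma lin_sum I r (P : pred I) (F : I -> U) :
  f (\sum_(i <- r | P i) F i) = \sum_(i <- r | P i) f (F i).
Proof. exact: (big_morph f linD lin0). Qed.
End LinF.

Definition lift2 {p q} {V : lmodType C} (F : 'M[C]_p -> 'M[C]_q -> V)
  (X : 'M[C]_(p * q)) : V :=
  \sum_(i < p) \sum_(j < p) \sum_(k < q) \sum_(l < q)
     X (mxtens_index (i, k)) (mxtens_index (j, l)) *: F (delta_mx i j) (delta_mx k l).

Definition bil {p q} {V : lmodType C} (F : 'M[C]_p -> 'M[C]_q -> V) :=
  (forall b, lin (fun a => F a b)) /\ (forall a, lin (F a)).

Section Lift.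
Variables (p q : nat) (V : lmodType C).
Implicit Types (F G H : 'M[C]_p -> 'M[C]_q -> V).

Lemma lift2P F : lin (lift2 F).
Proof.
move=> c X Y; rewrite /lift2 scaler_sumr -big_split; apply: eq_bigr => i _.
rewrite scaler_sumr -big_split; apply: eq_bigr => j _.
rewrite scaler_sumr -big_split; apply: eq_bigr => k _.
rewrite scaler_sumr -big_split; apply: eq_bigr => l _.
by rewrite !mxE scalerDl scalerA.
Qed.

Lemma lift2_ext F G X : (forall a b, F a b = G a b) -> lift2 F X = lift2 G X.
Proof.
move=> h; rewrite /lift2; apply: eq_bigr => i _; apply: eq_bigr => j _.
by apply: eq_bigr => k _; apply: eq_bigr => l _; rewrite h.
Qed.

Lemma lift2_linF F G H c X : (forall a b, F a b = c *: G a b + H a b) ->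
  lift2 F X = c *: lift2 G X + lift2 H X.
Proof.
move=> h; rewrite /lift2 scaler_sumr -big_split; apply: eq_bigr => i _.
rewrite scaler_sumr -big_split; apply: eq_bigr => j _.
rewrite scaler_sumr -big_split; apply: eq_bigr => k _.
rewrite scaler_sumr -big_split; apply: eq_bigr => l _.
by rewrite h scalerDr !scalerA mulrC.
Qed.

Lemma lift2_comp (W : lmodType C) (h : V -> W) F X : lin h ->
  h (lift2 F X) = lift2 (fun a b => h (F a b)) X.
Proof.
move=> hh; rewrite /lift2 lin_sum //; apply: eq_bigr => i _.
rewrite lin_sum //; apply: eq_bigr => j _.
rewrite lin_sum //; apply: eq_bigr => k _.
rewrite lin_sum //; apply: eq_bigr => l _.
by rewrite linZ.
Qed.

Lemma lin_expand m (W : lmodType C) (f : 'M[C]_m -> W) A : lin f ->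
  f A = \sum_(i < m) \sum_(j < m) A i j *: f (delta_mx i j).
Proof.
move=> hf; rewrite {1}(matrix_sum_delta A) lin_sum //; apply: eq_bigr => i _.
by rewrite lin_sum //; apply: eq_bigr => j _; rewrite linZ.
Qed.

Lemma lift2_tens F A B : bil F -> lift2 F (A *t B) = F A B.
Proof.
case=> h1 h2; rewrite (lin_expand A (h1 B)) /lift2; apply: eq_bigr => i _.
apply: eq_bigr => j _; rewrite (lin_expand B (h2 _)) scaler_sumr.
apply: eq_bigr => k _; rewrite scaler_sumr; apply: eq_bigr => l _.
by rewrite tensmxE scalerA.
Qed.

Lemma lift2_tsum F k (a : 'I_k -> 'M[C]_p) (b : 'I_k -> 'M[C]_q) : bil F ->
  lift2 F (\sum_(i < k) a i *t b i) = \sum_(i < k) F (a i) (b i).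
Proof.
move=> hF; rewrite lin_sum; last exact: lift2P.
by apply: eq_bigr => i _; rewrite lift2_tens.
Qed.
End Lift.

Lemma sum_idx p q (V : nmodType) (f : 'I_(p * q) -> V) :
  \sum_(i < p) \sum_(k < q) f (mxtens_index (i, k)) = \sum_r f r.
Proof.
rewrite pair_big [RHS](reindex (@mxtens_index p q)) /=.
  by apply: eq_bigr => -[a b] _.
by exists (@mxtens_unindex p q) => x _; rewrite ?mxtens_indexK ?mxtens_unindexK.
Qed.

Lemma tens_delta p q (i j : 'I_p) (k l : 'I_q) :
  delta_mx i j *t delta_mx k l = delta_mx (mxtens_index (i, k)) (mxtens_index (j, l)) :> 'M[C]_(p * q).
Proof.
apply/matrixP => r s; case: (mxtens_indexP r) => a b; case: (mxtens_indexP s) => c d.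
rewrite tensmxE !mxE !(inj_eq (can_inj (@mxtens_indexK _ _))) !xpair_eqE.
by rewrite -natrM mulnb andbACA.
Qed.

Lemma lift2_id p q (X : 'M[C]_(p * q)) : lift2 (fun a b => a *t b) X = X.
Proof.
rewrite {2}(matrix_sum_delta X) /lift2.
transitivity (\sum_(i < p) \sum_(k < q) \sum_(j < p) \sum_(l < q)
   X (mxtens_index (i, k)) (mxtens_index (j, l)) *:
     delta_mx (mxtens_index (i, k)) (mxtens_index (j, l)) : 'M[C]_(p * q)).
  apply: eq_bigr => i _; rewrite exchange_big; apply: eq_bigr => k _.
  by apply: eq_bigr => j _; apply: eq_bigr => l _; rewrite tens_delta.
rewrite (sum_idx (fun r => \sum_(j < p) \sum_(l < q) X r (mxtens_index (j, l)) *: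
     delta_mx r (mxtens_index (j, l)))).
by apply: eq_bigr => r _; rewrite (sum_idx (fun s => X r s *: delta_mx r s)).
Qed.

Lemma tensPl m m' p p' (c : C) (A B : 'M[C]_(m, m')) (X : 'M[C]_(p, p')) :
  (c *: A + B) *t X = c *: (A *t X) + B *t X.
Proof. by apply/matrixP => r s; rewrite !mxE mulrDl mulrA. Qed.
Lemma tensPr m m' p p' (c : C) (A B : 'M[C]_(m, m')) (X : 'M[C]_(p, p')) :
  X *t (c *: A + B) = c *: (X *t A) + X *t B.
Proof. by apply/matrixP => r s; rewrite !mxE mulrDr mulrCA. Qed.
Lemma mulPl m m' p (c : C) (A B : 'M[C]_(m, m')) (X : 'M[C]_(m', p)) :
  (c *: A + B) *m X = c *: (A *m X) + B *m X.
Proof. by rewrite mulmxDl scalemxAl. Qed.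
Lemma mulPr m m' p (c : C) (A B : 'M[C]_(m', p)) (X : 'M[C]_(m, m')) :
  X *m (c *: A + B) = c *: (X *m A) + X *m B.
Proof. by rewrite mulmxDr scalemxAr. Qed.
Lemma castP m n m' n' (eq : (m = m') * (n = n')) (c : C) (A B : 'M[C]_(m, n)) :
  castmx eq (c *: A + B) = c *: castmx eq A + castmx eq B.
Proof. by apply/matrixP => i j; rewrite !(castmxE, mxE). Qed.

Lemma tensmxA m n p m' n' p' (A : 'M[C]_(m, m')) (B : 'M[C]_(n, n')) (D : 'M[C]_(p, p')) :
  castmx (mulnA m n p, mulnA m' n' p') (A *t (B *t D)) = (A *t B) *t D.
Proof.
have cE : forall a b c (i : 'I_a) (j : 'I_b) (k : 'I_c),
  cast_ord (esym (mulnA a b c)) (mxtens_index (mxtens_index (i, j), k))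
  = mxtens_index (i, mxtens_index (j, k)).
  by move=> a b c i j k; apply: val_inj; rewrite /= mulnDl -mulnA addnA.
apply/matrixP => r s; case: (mxtens_indexP r) => r0 r2; case: (mxtens_indexP r0) => r00 r01.
case: (mxtens_indexP s) => s0 s2; case: (mxtens_indexP s0) => s00 s01.
by rewrite castmxE !cE !tensmxE mulrA.
Qed.

Lemma tens11 m : (1%:M : 'M[C]_m) *t (1%:M : 'M[C]_m) = 1%:M.
Proof.
apply/matrixP => r s; case: (mxtens_indexP r) => a b; case: (mxtens_indexP s) => c d.
rewrite tensmxE !mxE !(inj_eq (can_inj (@mxtens_indexK _ _))) !xpair_eqE.
by rewrite -natrM mulnb.
Qed.

End Gen.

Section WK.
Variables (R : realType) (n : nat) (M : {pred 'M[R[i]]_n})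
  (Delta : {linear 'M[R[i]]_n -> 'M[R[i]]_(n * n)})
  (S : {linear 'M[R[i]]_n -> 'M[R[i]]_n})
  (eps : {linear 'M[R[i]]_n -> R[i]^o}).
Hypothesis WK : weak_Kac_algebra Delta S eps M.
Local Notation C := (R[i]).
Local Notation Mn := 'M[C]_n.
Local Notation e := (Delta 1%:M).
Local Notation et := (eps_t Delta S).
Local Notation es := (eps_s Delta S).

Definition tri {V : lmodType C} (Phi : Mn -> Mn -> Mn -> V) :=
  [/\ forall v w, lin (fun u => Phi u v w), forall u w, lin (fun v => Phi u v w)
    & forall u v, lin (Phi u v)].

Lemma lift2PE p q (V : lmodType C) (F : 'M[C]_p -> 'M[C]_q -> V) c X Y :
  lift2 F (c *: X + Y) = c *: lift2 F X + lift2 F Y.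
Proof. exact: lift2P. Qed.

Lemma linDelta : lin Delta. Proof. by move=> c u v; rewrite linearP. Qed.
Lemma linS : lin S. Proof. by move=> c u v; rewrite linearP. Qed.

Lemma tmapE (f g : Mn -> Mn) (X : 'M[C]_(n * n)) : tmap f g X = lift2 (fun a b => f a *t g b) X.
Proof. by []. Qed.
Lemma tmulE (X : 'M[C]_(n * n)) : tmul X = lift2 (fun a b : Mn => a *m b) X.
Proof. by []. Qed.
Lemma tflipE (X : 'M[C]_(n * n)) : tflip X = lift2 (fun a b : Mn => b *t a) X.
Proof. by []. Qed.

Lemma bil_mul : bil (fun a b : Mn => a *m b).
Proof. by split=> [b|a] c u v; rewrite ?mulPl ?mulPr. Qed.
Lemma bil_tens (f g : Mn -> Mn) : lin f -> lin g -> bil (fun a b => f a *t g b).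
Proof. by move=> hf hg; split=> [b|a] c u v; rewrite ?hf ?hg ?tensPl ?tensPr. Qed.
Lemma bil_flip : bil (fun a b : Mn => b *t a).
Proof. by split=> [b|a] c u v; rewrite ?tensPl ?tensPr. Qed.

Lemma tmul_tens (a b : Mn) : tmul (a *t b) = a *m b.
Proof. by rewrite tmulE lift2_tens //; apply: bil_mul. Qed.
Lemma tflip_tens (a b : Mn) : tflip (a *t b) = b *t a.
Proof. by rewrite tflipE lift2_tens //; apply: bil_flip. Qed.
Lemma tmap_tens (f g : Mn -> Mn) (a b : Mn) : lin f -> lin g -> tmap f g (a *t b) = f a *t g b.
Proof. by move=> hf hg; rewrite tmapE lift2_tens //; apply: bil_tens. Qed.

Lemma tflipK (X : 'M[C]_(n * n)) : tflip (tflip X) = X.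
Proof.
rewrite [tflip X]tflipE (lift2_comp (h := @tflip R n)); last exact: lift2P.
rewrite -[RHS]lift2_id; apply: lift2_ext => a b; exact: tflip_tens.
Qed.

Lemma eps_tE y : et y = lift2 (fun a b => a *m S b) (Delta y).
Proof.
rewrite /eps_t tmulE tmapE (lift2_comp (h := lift2 (fun a b : Mn => a *m b))).
  by apply: lift2_ext => a b; rewrite -tmulE tmul_tens.
exact: lift2P.
Qed.
Lemma eps_sE y : es y = lift2 (fun a b => S a *m b) (Delta y).
Proof.
rewrite /eps_s tmulE tmapE (lift2_comp (h := lift2 (fun a b : Mn => a *m b))).
  by apply: lift2_ext => a b; rewrite -tmulE tmul_tens.
exact: lift2P.
Qed.
Lemma eps_tPE c u v : et (c *: u + v) = c *: et u + et v.
Proof. by rewrite !eps_tE linearP lift2PE. Qed.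
Lemma eps_sPE c u v : es (c *: u + v) = c *: es u + es v.
Proof. by rewrite !eps_sE linearP lift2PE. Qed.
Lemma lin_et : lin et. Proof. exact: eps_tPE. Qed.
Lemma lin_es : lin es. Proof. exact: eps_sPE. Qed.

Let Cst := wk_Cstar WK.
Lemma mem1 : 1%:M \in M. Proof. by case: Cst. Qed.
Lemma memD : {in M &, forall x y, x + y \in M}. Proof. by case: Cst. Qed.
Lemma memZ c : {in M, forall x, c *: x \in M}. Proof. by case: Cst. Qed.
Lemma memMul : {in M &, forall x y, x *m y \in M}. Proof. by case: Cst. Qed.
Lemma memA : {in M, forall x, mxadj x \in M}. Proof. by case: Cst. Qed.
Lemma mem0 : 0 \in M. Proof. by rewrite -(scale0r 1%:M) memZ // mem1. Qed.
Lemma memS x : x \in M -> S x \in M. Proof. exact: (wk_S_in WK). Qed.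
Lemma mem_sum k (F : 'I_k -> Mn) : (forall i, F i \in M) -> \sum_(i < k) F i \in M.
Proof.
move=> h; elim/big_ind: _ => //; [exact: mem0 | by move=> x y hx hy; apply: memD].
Qed.

Lemma D_ext x (V : lmodType C) (F G : Mn -> Mn -> V) : x \in M -> bil F -> bil G ->
  (forall a b, a \in M -> b \in M -> F a b = G a b) ->
  lift2 F (Delta x) = lift2 G (Delta x).
Proof.
move=> xM hF hG h; have [k [a [b [hab ->]]]] := wk_Delta_tens WK xM.
rewrite !lift2_tsum //; apply: eq_bigr => i _; case: (hab i) => ?? ; exact: h.
Qed.

Lemma coassoc_lift x (V : lmodType C) (Phi : Mn -> Mn -> Mn -> V) : x \in M -> tri Phi ->
  lift2 (fun u w => lift2 (fun u1 u2 => Phi u1 u2 w) (Delta u)) (Delta x)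
  = lift2 (fun u w => lift2 (fun w1 w2 => Phi u w1 w2) (Delta w)) (Delta x).
Proof.
move=> xM [h1 h2 h3].
pose G := fun (U : 'M[C]_(n * n)) (w : Mn) => lift2 (fun u1 u2 => Phi u1 u2 w) U.
pose L3 := fun X : 'M[C]_(n * n * n) => lift2 G X.
have bilG : bil G.
  split=> [w|U] c u v; first exact: lift2PE.
  by apply: lift2_linF => a b; rewrite h3.
have linL3 : lin L3 by move=> c u v; exact: lift2PE.
have L3t : forall A B W, L3 ((A *t B) *t W) = Phi A B W.
  by move=> A B W; rewrite /L3 lift2_tens // /G lift2_tens.
have L3c : forall A (Y : 'M[C]_(n * n)), L3 (castmx (mulnA n n n, mulnA n n n) (A *t Y))
    = lift2 (fun v w => Phi A v w) Y.
  move=> A Y; rewrite -{1}(lift2_id Y).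
  rewrite (lift2_comp (h := fun Y => L3 (castmx (mulnA n n n, mulnA n n n) (A *t Y)))).
    by apply: lift2_ext => v w; rewrite tensmxA L3t.
  by move=> c u v; rewrite tensPr castP linL3.
have co := wk_coassoc WK xM; move/(congr1 L3): co.
rewrite /Delta_id /id_Delta => co.
change (L3 (lift2 (fun a b : Mn => Delta a *t b) (Delta x)) =
        L3 (castmx (mulnA n n n, mulnA n n n) (lift2 (fun a b : Mn => a *t Delta b) (Delta x)))) in co.
move: co.
rewrite (lift2_comp (h := L3)) // (lift2_comp (h := fun X => L3 (castmx (mulnA n n n, mulnA n n n) X))); last first.
  by move=> c u v; rewrite castP linL3.
move=> co; transitivity (lift2 (fun a b => L3 (Delta a *t b)) (Delta x)).
  by apply: lift2_ext => a b; rewrite /L3 lift2_tens.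
rewrite co; apply: lift2_ext => a b; exact: L3c.
Qed.


Lemma DeltaS w : w \in M -> Delta (S w) = lift2 (fun p q => S q *t S p) (Delta w).
Proof.
move=> wM; have h := wk_S_Delta WK wM.
rewrite -[Delta (S w)]tflipK -h tflipE tmapE.
rewrite (lift2_comp (h := lift2 (fun a b : Mn => b *t a))); last exact: lift2P.
by apply: lift2_ext => a b; rewrite -tflipE tflip_tens.
Qed.

Lemma eps_tS p : p \in M -> et (S p) = S (es p).
Proof.
move=> pM; rewrite eps_tE DeltaS // eps_sE.
rewrite (lift2_comp (h := lift2 (fun a b : Mn => a *m S b))); last exact: lift2P.
rewrite (lift2_comp (h := S)); last exact: linS.
transitivity (lift2 (fun u v => S v *m S (S u)) (Delta p)).
  apply: lift2_ext => u v; rewrite lift2_tens //.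
  by split=> [b|a] c x y; rewrite ?linearP ?mulPl ?mulPr.
apply: D_ext => //.
- by split=> [b|a] c x y; rewrite ?linearP ?mulPl ?mulPr.
- by split=> [b|a] c x y; rewrite ?linearP ?mulPl ?mulPr ?linearP.
move=> a b aM bM; rewrite (wk_S_mul WK) ?memS // (wk_S_invol WK) //.
Qed.

Lemma tmap_eps_t y : y \in M -> tmap id et (Delta y) = e *m (y *t 1%:M).
Proof.
move=> yM; set z := S y; have zM : z \in M by exact: memS.
have Sz : S z = y by rewrite /z (wk_S_invol WK).
rewrite -{1}Sz DeltaS // tmapE.
rewrite (lift2_comp (h := lift2 (fun a b : Mn => id a *t et b))); last exact: lift2P.
transitivity (lift2 (fun p q => S q *t S (es p)) (Delta z)).
  transitivity (lift2 (fun p q => S q *t et (S p)) (Delta z)).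
    apply: lift2_ext => p q; rewrite lift2_tens //.
    by apply: bil_tens => //; apply: lin_et.
  apply: D_ext => //.
  - by split=> [b|a] c u v; rewrite ?linearP ?eps_tPE ?tensPl ?tensPr.
  - by split=> [b|a] c u v; rewrite ?linearP ?eps_sPE ?linearP ?tensPl ?tensPr.
  by move=> a b aM bM; rewrite eps_tS.
have hs := wk_eps_s WK zM.
transitivity (tflip (tmap S S (tmap es id (Delta z)))).
  rewrite [tmap es id _]tmapE (lift2_comp (h := tmap S S)); last exact: lift2P.
  rewrite (lift2_comp (h := @tflip R n)); last exact: lift2P.
  apply: lift2_ext => p q; rewrite tmap_tens; [|exact: linS|exact: linS].
  by rewrite tflip_tens.
rewrite hs /e_unit -{1}[Delta 1%:M]lift2_id.
rewrite (lift2_comp (h := fun X => (1%:M *t z) *m X)); last by move=> c u v; rewrite mulPr.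
rewrite (lift2_comp (h := tmap S S)); last exact: lift2P.
rewrite (lift2_comp (h := @tflip R n)); last exact: lift2P.
transitivity (lift2 (fun a b => S (z *m b) *t S a) e).
  apply: lift2_ext => a b; rewrite tensmx_mul mul1mx tmap_tens; [|exact: linS|exact: linS].
  by rewrite tflip_tens.
transitivity (lift2 (fun a b => (S b *t S a) *m (y *t 1%:M)) e).
  apply: D_ext; first exact: mem1.
  - by split=> [b|a] c u v; rewrite ?linearP ?mulPr ?linearP ?tensPl ?tensPr.
  - by split=> [b|a] c u v; rewrite ?linearP ?tensPl ?tensPr ?mulPl.
  by move=> a b aM bM; rewrite (wk_S_mul WK) // Sz tensmx_mul mulmx1.
rewrite -(lift2_comp (h := fun X => X *m (y *t 1%:M))); last by move=> c u v; rewrite mulPl.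
by rewrite -DeltaS ?mem1 // (wk_S_unit WK).
Qed.

Ltac lin_step := first [ apply: lift2_linF => ? ?; cbv beta
  | progress rewrite ?linearP ?lift2PE ?eps_tPE ?eps_sPE ?mulPl ?mulPr ?tensPl ?tensPr ?scalerDr ?scalerA ].
Ltac bil_tac := split=> [?|?] ? ? ?; cbv beta; repeat lin_step; try done.
Ltac tri_tac := split=> [? ?|? ?|? ?] ? ? ?; cbv beta; repeat lin_step; try done.

Lemma sliceE (phi : Mn -> C) X : slice_r phi X = lift2 (fun a b => phi b *: a) X.
Proof. by []. Qed.

Lemma es1 : es 1%:M = 1%:M.
Proof.
have h := wk_eps_s WK mem1; rewrite tens11 mul1mx /e_unit in h.
have h2 := wk_eps_r WK mem1.
transitivity (es (slice_r eps (Delta 1%:M))); first by rewrite h2.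
rewrite -[in RHS]h2 -[in RHS]h sliceE tmapE.
rewrite (lift2_comp (h := es)); last exact: lin_es.
rewrite (lift2_comp (h := slice_r eps)); last exact: lift2P.
apply: lift2_ext => a b; rewrite sliceE lift2_tens.
  by rewrite linZ //; exact: lin_es.
split=> [b'|a'] c u v; first by rewrite scalerDr !scalerA mulrC.
by rewrite linearP scalerDl scalerA.
Qed.

Lemma et1 : et 1%:M = 1%:M.
Proof. by rewrite -{1}(wk_S_unit WK) eps_tS ?mem1 // es1 (wk_S_unit WK). Qed.

Lemma etM x : x \in M -> et x \in M.
Proof.
move=> xM; rewrite eps_tE; have [k [a [b [hab ->]]]] := wk_Delta_tens WK xM.
rewrite lift2_tsum; last by bil_tac.
by apply: mem_sum => i; case: (hab i) => ??; apply: memMul => //; apply: memS.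
Qed.

Lemma Delta_et x : x \in M -> Delta (et x) = e *m (et x *t 1%:M).
Proof.
move=> xM.
rewrite {1}eps_tE (lift2_comp (h := Delta)); last exact: linDelta.
transitivity (lift2 (fun u w => Delta u *m Delta (S w)) (Delta x)).
  apply: D_ext => //; try by bil_tac.
  by move=> a b aM bM; rewrite (wk_Delta_mul WK) // memS.
transitivity (lift2 (fun u w => lift2 (fun u1 u2 => (u1 *t u2) *m Delta (S w)) (Delta u)) (Delta x)).
  apply: lift2_ext => u w.
  rewrite -(lift2_comp (h := fun X => X *m Delta (S w))) ?lift2_id //.
  by move=> c a b; rewrite mulPl.
rewrite (coassoc_lift (Phi := fun u1 u2 w => (u1 *t u2) *m Delta (S w))) //; last by tri_tac.
transitivity (lift2 (fun u w => lift2 (fun w1 w2 =>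
    lift2 (fun p q => (u *m S q) *t (w1 *m S p)) (Delta w2)) (Delta w)) (Delta x)).
  apply: D_ext => //; try by bil_tac.
  move=> u w uM wM; apply: D_ext => //; try by bil_tac.
  move=> w1 w2 _ w2M; rewrite DeltaS //.
  rewrite (lift2_comp (h := fun X => (u *t w1) *m X)); last by move=> c a b; rewrite mulPr.
  by apply: lift2_ext => p q; rewrite tensmx_mul.
transitivity (lift2 (fun u w => lift2 (fun w' q => (u *m S q) *t et w') (Delta w)) (Delta x)).
  apply: D_ext => //; try by bil_tac.
  move=> u w uM wM.
  have := coassoc_lift (Phi := fun w1 p q => (u *m S q) *t (w1 *m S p)) wM.
  cbv beta => <-; last by tri_tac.
  apply: lift2_ext => w' q; rewrite eps_tE.
  by rewrite (lift2_comp (h := fun X => (u *m S q) *t X)) // => c a b; rewrite tensPr.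
have := coassoc_lift (Phi := fun u w' q => (u *m S q) *t et w') xM.
cbv beta => <-; last by tri_tac.
transitivity (lift2 (fun U q => e *m ((U *m S q) *t 1%:M)) (Delta x)).
  apply: D_ext => //; try by bil_tac.
  move=> U q UM qM.
  transitivity (tmap id et (Delta U) *m (S q *t 1%:M)).
    rewrite tmapE (lift2_comp (h := fun X => X *m (S q *t 1%:M))); last by move=> c a b; rewrite mulPl.
    by apply: lift2_ext => u w'; rewrite tensmx_mul mulmx1.
  by rewrite tmap_eps_t // -mulmxA tensmx_mul mul1mx.
rewrite -(lift2_comp (h := fun Y => e *m (Y *t 1%:M))) -?eps_tE //.
by move=> c a b; rewrite tensPl mulPr.
Qed.

Lemma mxadjD p (A B : 'M[C]_p) : mxadj (A + B) = mxadj A + mxadj B.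
Proof. by apply/matrixP => i j; rewrite !mxE rmorphD. Qed.
Lemma mxadj0 p : mxadj (0 : 'M[C]_p) = 0.
Proof. by apply/matrixP => i j; rewrite !mxE rmorph0. Qed.
Lemma mxadj_sum p k (F : 'I_k -> 'M[C]_p) : mxadj (\sum_(i < k) F i) = \sum_(i < k) mxadj (F i).
Proof. exact: (big_morph _ (@mxadjD p) (@mxadj0 p)). Qed.
Lemma mxadjM p (A B : 'M[C]_p) : mxadj (A *m B) = mxadj B *m mxadj A.
Proof. by rewrite /mxadj map_mxM trmx_mul. Qed.
Lemma mxadj_tens (A B : Mn) : mxadj (A *t B) = mxadj A *t mxadj B.
Proof. by rewrite /mxadj map_mxT trmx_tens. Qed.
Lemma mxadj1 p : mxadj (1%:M : 'M[C]_p) = 1%:M.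
Proof. by rewrite /mxadj map_mx1 trmx1. Qed.
Lemma mxadjK p (A : 'M[C]_p) : mxadj (mxadj A) = A.
Proof. by apply/matrixP => i j; rewrite !mxE conjcK. Qed.

Lemma et_adj v : v \in M -> mxadj (et v) = et (S (mxadj v)).
Proof.
move=> vM; have [k [a [b [hab hd]]]] := wk_Delta_tens WK vM.
rewrite !eps_tE (DeltaS (memA vM)) (wk_Delta_adj WK vM) hd.
rewrite lift2_tsum; last by bil_tac.
rewrite !mxadj_sum (eq_bigr _ (fun i _ => mxadj_tens (a i) (b i))).
rewrite lift2_tsum; last by bil_tac.
rewrite lift2_tsum; last by bil_tac.
apply: eq_bigr => i _; case: (hab i) => aM bM.
by rewrite mxadjM (wk_S_adj WK) // (wk_S_invol WK) // memA.
Qed.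

Lemma Delta_et_r x : x \in M -> Delta (et x) = (et x *t 1%:M) *m e.
Proof.
move=> xM; set v := mxadj (S x); have vM : v \in M by apply: memA; apply: memS.
have -> : et x = mxadj (et v) by rewrite et_adj // /v mxadjK (wk_S_invol WK).
rewrite (wk_Delta_adj WK (etM vM)) Delta_et // mxadjM mxadj_tens mxadj1.
by rewrite -(wk_Delta_adj WK mem1) mxadj1.
Qed.

End WK.

Theorem corollary2p1p9 (R : realType) (n : nat) (M : {pred 'M[R[i]]_n})
  (Delta : {linear 'M[R[i]]_n -> 'M[R[i]]_(n * n)})
  (S : {linear 'M[R[i]]_n -> 'M[R[i]]_n})
  (eps : {linear 'M[R[i]]_n -> R[i]^o}) :
  weak_Kac_algebra Delta S eps M ->
  [/\ eps_t Delta S 1%:M = 1%:M,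
      {in M, forall x, in_Nt Delta M (eps_t Delta S x)} &
      forall x, in_Ns Delta M x ->
        tmap id (eps_t Delta S) (Delta x)
        = e_unit Delta *m (x *t (1%:M : 'M[R[i]]_n))].
Proof.
move=> WK; split.
- exact: (et1 WK).
- move=> x xM; split; [exact: (etM WK) | exact: (Delta_et WK) | exact: (Delta_et_r WK)].
- by move=> x [xM _ _]; exact: (tmap_eps_t WK).
Qed.
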